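(* Let $M\in\mathrm{M}_n(\mathbb{K})$ and suppose $\mathbb{K}^n=V_1\oplus\cdots\oplus V_t$ where each $V_i$ is a $\mathbb{K}$-subspace with $V_iM^t\subseteq V_i$. Let $d_i=\dim_{\mathbb{K}}V_i$ and let $P_i\in\mathrm{M}_{d_i\times n}(\mathbb{K})$ be a matrix whose rows form a $\mathbb{K}$-basis of $V_i$. Let $\mathcal{C}\subseteq\mathbb{L}^n$ be an $M$-code with parameters $[n,k]$, $k\ge1$, such that $\mathcal{C}=(\mathcal{C}\cap(V_1)_{\mathbb{L}})\oplus\cdots\oplus(\mathcal{C}\cap(V_t)_{\mathbb{L}})$. For each $i$ set $k_i=\dim_{\mathbb{L}}(\mathcal{C}\cap(V_i)_{\mathbb{L}})$ and $\mathcal{C}_i=\{c\in\mathbb{L}^{d_i} : cP_i\in\mathcal{C}\cap(V_i)_{\mathbb{L}}\}$, and let $\Lambda=\{i : \mathcal{C}\cap(V_i)_{\mathbb{L}}\neq\{0\}\}$. Then: (1) the map $u:(c_1,\dots,c_t)\in\mathbb{L}^{d_1}\times\cdots\times\mathbb{L}^{d_t}\mapsto\sum_i c_iP_i\in\mathbb{L}^n$ restricts to an $\mathbb{L}$-isomorphism $\mathcal{C}_1\times\cdots\times\mathcal{C}_t\to\mathcal{C}$, and $M_r(\mathcal{C}_1\times\cdots\times\mathcal{C}_t)=M_r(\mathcal{C})$ for all $r\in\{1,\dots,k\}$ (the product viewed as a code in $\mathbb{L}^n$ by concatenation); (2) for all $r\in\{1,\dots,k\}$, $$M_r(\mathcal{C})=\min_{\substack{\sum_{i\in\Lambda}r_i=r\\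 r_i\in\{0,\dots,k_i\}}}\ \sum_{i\in\Lambda}M_{r_i}(\mathcal{C}_i)=\min_{\substack{\sum_{i\in\Lambda}r_i=r\\ r_i\in\{0,\dots,k_i\}}}\ \sum_{i\in\Lambda}M_{r_i}(\mathcal{C}\cap(V_i)_{\mathbb{L}});$$ (3) for all $i\in\Lambda$ and $r_i\in\{1,\dots,k_i\}$, $M_{r_i}(\mathcal{C}_i)\le d_i-k_i+r_i$; (4) for all $r\in\{1,\dots,k\}$, $$M_r(\mathcal{C})\le\min_{\substack{\sum_{i\in\Lambda}r_i=r\\ r_i\in\{0,\dots,k_i\}}}\Big(\sum_{i\in\Lambda,\ r_i\neq0}(d_i-k_i)\Big)+r.$$
   Context: Let $\mathbb{L}/\mathbb{K}$ be a field extension of finite degree $m$, and $n\ge 1$ an integer with $m\ge n$ (standing assumption). Vectors are row vectors. Fix a $\mathbb{K}$-basis $\mathcal{B}$ of $\mathbb{L}$; for $c=(c_1,\dots,c_n)\in\mathbb{L}^n$ let $M_{\mathcal{B}}(c)\in\mathrm{M}_{m\times n}(\mathbb{K})$ be the matrix whose $j$-th column is the coordinate vector of $c_j$ in $\mathcal{B}$. The rank support $\mathrm{Rsupp}(c)\subseteq\mathbb{K}^n$ is the $\mathbb{K}$-row space of $M_{\mathcal{B}}(c)$, and $\mathrm{wt}_R(c)=\dim_{\mathbb{K}}\mathrm{Rsupp}(c)$. For an $\mathbb{L}$-subspace $\mathcal{D}\subseteq\mathbb{L}^n$, $\mathrm{Rsupp}(\mathcal{D})$ is the $\mathbb{K}$-span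 of all $\mathrm{Rsupp}(d)$, $d\in\mathcal{D}$, and $\mathrm{wt}_R(\mathcal{D})=\dim_{\mathbb{K}}\mathrm{Rsupp}(\mathcal{D})$. A linear $[n,k]$ code is a $k$-dimensional $\mathbb{L}$-subspace $\mathcal{C}\subseteq\mathbb{L}^n$; for $1\le r\le k$, $M_r(\mathcal{C})=\min\{\mathrm{wt}_R(\mathcal{D}) : \mathcal{D}\subseteq\mathcal{C},\ \dim_{\mathbb{L}}\mathcal{D}=r\}$ (the $r$-th generalized rank weight), and $M_0(\mathcal{C})=0$ by convention. For $M\in\mathrm{M}_n(\mathbb{K})$, a linear code $\mathcal{C}\subseteq\mathbb{L}^n$ is an $M$-code if $cM^t\in\mathcal{C}$ for all $c\in\mathcal{C}$. For a $\mathbb{K}$-subspace $V\subseteq\mathbb{K}^n$, $V_{\mathbb{L}}$ denotes the $\mathbb{L}$-subspace of $\mathbb{L}^n$ spanned by $V$. *)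

(* Defs.v *)
From HB Require Import structures.
From mathcomp Require Import all_boot all_order all_algebra all_field.
From mathcomp Require Import boolp.
Set Implicit Arguments. Unset Strict Implicit. Unset Printing Implicit Defensive.
Import GRing.Theory.
Local Open Scope ring_scope.

(* Infimum of a set of natural numbers (0 if the set is empty). *)
Lemma natmin_subproof (P : nat -> Prop) :
  (exists n, P n) -> exists n, `[< P n >].
Proof. by case=> n hn; exists n; apply/asboolP. Qed.

Definition natmin (P : nat -> Prop) : nat :=
  match pselect (exists n, P n) with
  | left h => ex_minn (natmin_subproof h)
  | right _ => 0%N
  end.

Section RankMetric.
Variables (K : fieldType) (L : fieldExtType K).
(* B : a K-basis of L (m = \dim {:L} = [L:K]). *)
Variable B : (\dim {:L}).-tuple L.

(* M_B(c): m x n matrix over K whose j-th column is the coordinate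
   vector of c_j in the basis B. Its K-row space is Rsupp(c). *)
Definition Bmx n (c : 'rV[L]_n) : 'M[K]_(\dim {:L}, n) :=
  \matrix_(i, j) coord B i (c 0 j).

Definition wtR n (c : 'rV[L]_n) : nat := \rank (Bmx c).

(* wt_R(D) for the L-subspace D of L^n given as the row space of a
   matrix D: the dimension of the K-span of all Rsupp(d), d in D, i.e.
   of the smallest K-subspace of K^n containing every Rsupp(d). *)
Definition wtRsp n p (D : 'M[L]_(p, n)) : nat :=
  natmin (fun w => exists V : 'M[K]_n,
            \rank V = w /\ forall d : 'rV[L]_n, (d <= D)%MS -> (Bmx d <= V)%MS).

(* For r = 0 this is 0 (D = 0), matching the convention M_0 = 0. *)
Definition GRW n p (C : 'M[L]_(p, n)) (r : nat) : nat :=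
  natmin (fun w => exists D : 'M[L]_n,
            [/\ (D <= C)%MS, \rank D = r & wtRsp D = w]).

End RankMetric.

Definition toL (K : fieldType) (L : fieldExtType K) m n (A : 'M[K]_(m, n))
  : 'M[L]_(m, n) := map_mx (in_alg L) A.

(* Main.v *)
Require Import Defs.
From HB Require Import structures.
From mathcomp Require Import all_boot all_order all_algebra all_field.
From mathcomp Require Import boolp zify.
Set Implicit Arguments. Unset Strict Implicit. Unset Printing Implicit Defensive.
Import GRing.Theory.
Local Open Scope ring_scope.

Lemma natminP (P : nat -> Prop) : (exists n, P n) ->
  P (natmin P) /\ forall m, P m -> (natmin P <= m)%N.
Proof.
move=> h; rewrite /natmin; case: pselect => [h'|]; last by [].
case: ex_minnP => m /asboolP Pm mmin; split=> // k Pk; apply: mmin.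
exact/asboolP.
Qed.

Lemma natmin_le (P : nat -> Prop) m : P m -> (natmin P <= m)%N.
Proof. by move=> Pm; apply: (natminP (ex_intro _ m Pm)).2. Qed.

Lemma natmin_ext (P Q : nat -> Prop) : (forall n, P n <-> Q n) -> natmin P = natmin Q.
Proof. by move=> h; have -> : P = Q by apply: funext => n; apply: propext. Qed.

Section Gen.
Variables (K : fieldType) (L : fieldExtType K) (B : (\dim {:L}).-tuple L).
Hypothesis HB : basis_of fullv B.

Lemma toL_mul m n p (A : 'M[K]_(m,n)) (C : 'M[K]_(n,p)) :
  toL L (A *m C) = toL L A *m toL L C.
Proof. exact: map_mxM. Qed.

Lemma toL_sub m1 m2 n (A : 'M[K]_(m1,n)) (C : 'M[K]_(m2,n)) :
  (toL L A <= toL L C)%MS = (A <= C)%MS.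
Proof. exact: map_submx. Qed.

Lemma toL_rank m n (A : 'M[K]_(m,n)) : \rank (toL L A) = \rank A.
Proof. exact: mxrank_map. Qed.

Lemma Bmx_mul n p (w : 'rV[L]_p) (V : 'M[K]_(p,n)) :
  Bmx B (w *m toL L V) = Bmx B w *m V.
Proof.
apply/matrixP => i j; rewrite !mxE linear_sum /=.
apply: eq_bigr => l _; rewrite !mxE /= mulr_algr linearZ /=.
by rewrite mulrC.
Qed.

Lemma Bmx_expand n (x : 'rV[L]_n) :
  x = \sum_(i < \dim {:L}) B`_i *: toL L (row i (Bmx B x)).
Proof.
apply/rowP => j; rewrite summxE.
have hs : x 0 j \in span B by move/andP: HB => [/eqP -> _]; exact: memvf.
rewrite {1}(coord_span hs); apply: eq_bigr => i _.
by rewrite !mxE /= mulr_algr.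
Qed.

Lemma Bmx_toL n s (D : 'M[L]_(s,n)) (V : 'M[K]_n) :
  (forall d : 'rV_n, (d <= D)%MS -> (Bmx B d <= V)%MS) <-> (D <= toL L V)%MS.
Proof.
split=> [h|h d dD].
  apply/row_subP => i; have := h _ (row_sub i D).
  move=> hb; rewrite (Bmx_expand (row i D)); apply: summx_sub => l _.
  apply: scalemx_sub; rewrite toL_sub; exact: submx_trans (row_sub _ _) hb.
have /submxP [w ->] := submx_trans dD h.
by rewrite Bmx_mul submxMl.
Qed.

Definition W n s (D : 'M[L]_(s,n)) : nat :=
  natmin (fun w => exists q (V : 'M[K]_(q,n)), \rank V = w /\ (D <= toL L V)%MS).

Lemma wtRspE n s (D : 'M[L]_(s,n)) : wtRsp B D = W D.
Proof.
apply: natmin_ext => w; split.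
  by case=> V [<- h]; exists n, V; split=> //; apply/Bmx_toL.
case=> q [V [<- h]]; exists <<V>>%MS; rewrite genmxE; split=> //.
apply/Bmx_toL; apply: submx_trans h _; rewrite toL_sub genmxE //.
Qed.

Lemma W_spec n s (D : 'M[L]_(s,n)) :
  (exists q (V : 'M[K]_(q,n)), \rank V = W D /\ (D <= toL L V)%MS) /\
  (forall q (V : 'M[K]_(q,n)), (D <= toL L V)%MS -> (W D <= \rank V)%N).
Proof.
have ne : exists w q (V : 'M[K]_(q,n)), \rank V = w /\ (D <= toL L V)%MS.
  exists n, n, 1%:M; rewrite mxrank1; split=> //.
  by rewrite /toL map_mx1 submx1.
have [h1 h2] := natminP ne; split; first exact: h1.
by move=> q V h; apply: h2; exists q, V.
Qed.

Lemma W_le n s q (D : 'M[L]_(s,n)) (V : 'M[K]_(q,n)) :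
  (D <= toL L V)%MS -> (W D <= \rank V)%N.
Proof. exact: (W_spec D).2. Qed.

Lemma W_S n s1 s2 (D1 : 'M[L]_(s1,n)) (D2 : 'M[L]_(s2,n)) :
  (D1 <= D2)%MS -> (W D1 <= W D2)%N.
Proof.
move=> h; have [[q [V [<- hV]]] _] := W_spec D2.
apply: W_le; exact: submx_trans h hV.
Qed.

Lemma W_eq n s1 s2 (D1 : 'M[L]_(s1,n)) (D2 : 'M[L]_(s2,n)) :
  (D1 :=: D2)%MS -> W D1 = W D2.
Proof. by move=> e; apply/eqP; rewrite eqn_leq !W_S // e. Qed.

Lemma W0 n s : W (0 : 'M[L]_(s,n)) = 0%N.
Proof.
apply/eqP; rewrite -leqn0; have := @W_le n s n 0 0.
by rewrite mxrank0 sub0mx; apply.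
Qed.

Lemma W_free n s p (D : 'M[L]_(s,p)) (Q : 'M[K]_(p,n)) :
  row_free Q -> W (D *m toL L Q) = W D.
Proof.
move=> fQ; apply/eqP; rewrite eqn_leq; apply/andP; split.
  have [[q [V [<- hV]]] _] := W_spec D.
  apply: leq_trans (mxrankM_maxl V Q); apply: W_le.
  by rewrite toL_mul submxMr.
have [[q [V [<- hV]]] _] := W_spec (D *m toL L Q).
have /row_freeP [R QR] := fQ.
apply: leq_trans (mxrankM_maxl V R); apply: W_le.
have -> : D = D *m toL L Q *m toL L R by rewrite -mulmxA -toL_mul QR /toL map_mx1 mulmx1.
by rewrite toL_mul submxMr.
Qed.


Lemma exists_sub_rank (F : fieldType) m n (X : 'M[F]_(m,n)) r :
  (r <= \rank X)%N -> exists D : 'M[F]_(r,n), (D <= X)%MS /\ \rank D = r.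
Proof.
move=> hr; exists (pid_mx r *m row_base X); split.
  by apply: submx_trans (submxMl _ _) _; rewrite eq_row_base.
by rewrite mxrankMfree ?row_base_free // rank_pid_mx.
Qed.

Lemma GRWE n p (C : 'M[L]_(p,n)) r : GRW B C r =
  natmin (fun w => exists s (D : 'M[L]_(s,n)), [/\ (D <= C)%MS, \rank D = r & W D = w]).
Proof.
apply: natmin_ext => w; split.
  by case=> D [h1 h2 h3]; exists n, D; split=> //; rewrite -wtRspE.
case=> s [D [h1 h2 h3]]; exists <<D>>%MS; split; rewrite ?genmxE //.
by rewrite wtRspE -h3; apply: W_eq; apply: genmxE.
Qed.

Lemma GRW_le n p s (C : 'M[L]_(p,n)) (D : 'M[L]_(s,n)) :
  (D <= C)%MS -> (GRW B C (\rank D) <= W D)%N.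
Proof. by move=> h; rewrite GRWE; apply: natmin_le; exists s, D. Qed.

Lemma GRW_spec n p (C : 'M[L]_(p,n)) r : (r <= \rank C)%N ->
  exists D : 'M[L]_(r,n), [/\ (D <= C)%MS, \rank D = r & W D = GRW B C r].
Proof.
move=> hr; have [D0 [h1 h2]] := exists_sub_rank hr.
have ne : exists w s (D : 'M[L]_(s,n)), [/\ (D <= C)%MS, \rank D = r & W D = w].
  by exists (W D0), r, D0.
have [[s [D [d1 d2 d3]]] _] := natminP ne.
have [D' [e1 e2]] := exists_sub_rank (eq_leq (esym d2)).
have eqD : (D' :=: D)%MS.
  apply/eqmxP; rewrite -mxrank_leqif_eq // e2 d2 //.
exists D'; split=> //; first by rewrite eqD.
by rewrite GRWE (W_eq eqD).
Qed.

Lemma GRW0 n p (C : 'M[L]_(p,n)) : GRW B C 0 = 0%N.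
Proof.
apply/eqP; rewrite -leqn0; have := @GRW_le n p n C 0.
by rewrite mxrank0 W0 sub0mx; apply.
Qed.

Lemma GRW_eq n p1 p2 (C1 : 'M[L]_(p1,n)) (C2 : 'M[L]_(p2,n)) r :
  (C1 :=: C2)%MS -> GRW B C1 r = GRW B C2 r.
Proof.
move=> e; rewrite !GRWE; apply: natmin_ext => w.
by split; case=> s [D [h1 h2 h3]]; exists s, D; split; rewrite ?e // -?e.
Qed.

Lemma GRW_free n p q (C : 'M[L]_(p,q)) (Q : 'M[K]_(q,n)) r :
  row_free Q -> GRW B (C *m toL L Q) r = GRW B C r.
Proof.
move=> fQ; have fQL : row_free (toL L Q) by rewrite /toL row_free_map.
rewrite !GRWE; apply: natmin_ext => w; split.
  case=> s [D [h1 h2 h3]]; have /submxP [u eD] := h1; rewrite eD in h2 h3.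
  exists s, (u *m C); split; first exact: submxMl.
    by rewrite -h2 mulmxA (mxrankMfree _ fQL).
  by rewrite -h3 mulmxA (W_free _ fQ).
case=> s [D [h1 h2 h3]]; exists s, (D *m toL L Q); split.
- exact: submxMr.
- by rewrite (mxrankMfree _ fQL).
- by rewrite (W_free _ fQ).
Qed.


Section Lower.
Variables (I : finType) (n : nat) (X : I -> 'M[K]_n) (A : I -> 'M[L]_n).
Hypothesis HXd : mxdirect (\sum_i X i).
Hypothesis HAX : forall i, (A i <= toL L (X i))%MS.

Lemma lower (S : {set I}) s (D : 'M[L]_(s,n)) : (D <= \sum_(i in S) A i)%MS ->
  exists rho : I -> nat, [/\ forall i, (rho i <= \rank (A i))%N,
     (\sum_(i in S) rho i)%N = \rank D &
     (\sum_(i in S) GRW B (A i) (rho i) <= W D)%N].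
Proof.
move: {2}#|S| (erefl #|S|) => N; elim: N S s D => [|N IH] S s D hS hD.
  have S0 : S = set0 by apply: cards0_eq.
  rewrite S0 big_set0 submx0 in hD; move/eqP: hD => ->.
  exists (fun=> 0%N); split=> //; by rewrite S0 big_set0 ?mxrank0.
have [j Sj] : exists j, j \in S by apply/card_gt0P; rewrite hS.
have hS' : #|S :\ j| = N by move: hS; rewrite (cardsD1 j S) Sj add1n => [[]].
rewrite (big_setD1 j Sj) /= in hD.
set Bs := (\sum_(i in S :\ j) A i)%MS in hD.
set Y := (\sum_(i in S :\ j) X i)%MS.
set E := proj_mx (X j) Y.
have hXY : (X j :&: Y = 0)%MS.
  move/mxdirect_sumsP: HXd => /(_ j isT) h0.
  apply/eqP; rewrite -submx0 -h0 capmxS //.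
  by apply/sumsmx_subP => i /setD1P [ij _]; rewrite (sumsmx_sup i) // eq_sym ij.
have hXE : X j *m E = X j by rewrite proj_mx_id.
have hYE : Y *m E = 0 by rewrite proj_mx_0.
have hBY : (Bs <= toL L Y)%MS.
  apply/sumsmx_subP => i Si; apply: submx_trans (HAX i) _.
  by rewrite toL_sub (sumsmx_sup i).
have hAE : A j *m toL L E = A j.
  by have /submxP [u ->] := HAX j; rewrite -mulmxA -toL_mul hXE.
have hBE : Bs *m toL L E = 0.
  by have /submxP [u ->] := hBY; rewrite -mulmxA -toL_mul hYE /toL map_mx0 mulmx0.
have [[u1 u2] /= eD] := sub_addsmxP hD.
have eDE : D *m toL L E = u1 *m A j.
  by rewrite eD mulmxDl -!mulmxA hAE hBE mulmx0 addr0.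
have hDE : (D *m toL L E <= A j)%MS by rewrite eDE submxMl.
set D' := (D :&: kermx (toL L E))%MS.
have hD'B : (D' <= Bs)%MS.
  have hD'D : (D' <= A j + Bs)%MS by apply: submx_trans hD; apply: capmxSl.
  have [[v1 v2] /= eD'] := sub_addsmxP hD'D.
  have : D' *m toL L E = 0 by apply/eqP; rewrite -sub_kermx capmxSr.
  rewrite {1}eD' mulmxDl -!mulmxA hAE hBE mulmx0 addr0 => v10.
  by rewrite eD' v10 add0r submxMl.
have hrank : (\rank (D *m toL L E) + \rank D')%N = \rank D by apply: mxrank_mul_ker.
have [rho' [b' s' g']] := IH (S :\ j) _ D' hS' hD'B.
have hW : (W (D *m toL L E) + W D' <= W D)%N.
  have [[q [V [<- hV]]] _] := W_spec D.
  rewrite -(mxrank_mul_ker V E); apply: leq_add.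
    by apply: W_le; rewrite toL_mul submxMr.
  apply: leq_trans (_ : W D' <= \rank (V :&: Y))%N _.
    apply: W_le; rewrite (map_capmx (in_alg L) V Y) sub_capmx.
    rewrite (submx_trans _ hV) ?capmxSl //.
    exact: submx_trans hD'B hBY.
  by apply: mxrankS; apply: capmxS => //; rewrite sub_kermx hYE.
exists (fun i => if i == j then \rank (D *m toL L E) else rho' i); split.
- by move=> i; case: eqP => [->|_]; [apply: mxrankS | apply: b'].
- rewrite (big_setD1 j Sj) /= eqxx -hrank -s'; congr (_ + _)%N.
  by apply: eq_bigr => i /setD1P [/negbTE -> _].
- rewrite (big_setD1 j Sj) /= eqxx; apply: leq_trans hW; apply: leq_add.
    exact: GRW_le.
  apply: leq_trans g'; rewrite leq_eqVlt; apply/orP; left; apply/eqP.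
  by apply: eq_bigr => i /setD1P [/negbTE -> _].
Qed.

End Lower.


Lemma singleton d (Cc : 'M[L]_d) ri : (ri <= \rank Cc)%N ->
  (GRW B Cc ri <= d - \rank Cc + ri)%N.
Proof.
move=> hr; set k := \rank Cc.
have hk : (k <= d)%N by apply: rank_leq_col.
set V : 'M[K]_d := pid_mx (d - k + ri).
have hV : \rank V = (d - k + ri)%N by rewrite rank_pid_mx //; lia.
have hcap : (ri <= \rank (Cc :&: toL L V))%N.
  have := mxrank_sum_cap Cc (toL L V); rewrite toL_rank hV.
  have := rank_leq_col (Cc + toL L V)%MS; rewrite -/k; lia.
have [D [h1 h2]] := exists_sub_rank hcap.
rewrite -{1}h2; apply: leq_trans (GRW_le (submx_trans h1 (capmxSl _ _))) _.
by rewrite -hV; apply: W_le; apply: submx_trans h1 (capmxSr _ _).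
Qed.

End Gen.

Lemma direct_sum0 (F : fieldType) (I : finType) n (A_ : I -> 'M[F]_n)
  (u : I -> 'rV[F]_n) : mxdirect (\sum_i A_ i) ->
  (forall i, (u i <= A_ i)%MS) -> \sum_i u i = 0 -> forall i, u i = 0.
Proof.
move/mxdirect_sumsP => dx hu s0 j.
have e : u j = - \sum_(i | i != j) u i.
  by move: s0; rewrite (bigD1 j) //= => /eqP; rewrite addr_eq0 => /eqP.
apply/eqP; rewrite -submx0 -(dx j isT) sub_capmx hu /= e eqmx_opp.
by apply: summx_sub => i ij; rewrite (sumsmx_sup i).
Qed.

Theorem theorem3 (K : fieldType) (L : fieldExtType K)
  (B : (\dim {:L}).-tuple L) (HB : basis_of fullv B)
  (n : nat) (Hmn : (n <= \dim {:L})%N)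
  (M : 'M[K]_n)
  (t : nat) (d : 'I_t -> nat) (P : forall i : 'I_t, 'M[K]_(d i, n))
  (* rows of P i form a K-basis of V_i *)
  (HPfree : forall i, row_free (P i))
  (* K^n = V_1 (+) ... (+) V_t *)
  (HVsum : ((\sum_i <<P i>>)%MS :=: 1%:M)%MS)
  (HVdirect : mxdirect (\sum_i <<P i>>)%MS)
  (* V_i M^t \subseteq V_i *)
  (HVinv : forall i, (P i *m M^T <= P i)%MS)
  (C : 'M[L]_n) (k : nat)
  (* C is an M-code *)
  (HMcode : forall c : 'rV[L]_n, (c <= C)%MS -> (c *m (toL L M)^T <= C)%MS)
  (* parameters [n,k], k >= 1 *)
  (HCdim : \rank C = k) (Hk : (1 <= k)%N)
  (* C = (C \cap (V_1)_L) (+) ... (+) (C \cap (V_t)_L) *)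
  (HCsum : (C :=: \sum_i (C :&: toL L (P i)))%MS)
  (HCdirect : mxdirect (\sum_i (C :&: toL L (P i)))%MS)
  (* C_i = { c in L^{d_i} : c P_i \in C \cap (V_i)_L } *)
  (Ci : forall i : 'I_t, 'M[L]_(d i))
  (HCi : forall i (c : 'rV[L]_(d i)),
      (c <= Ci i)%MS = (c *m toL L (P i) <= C :&: toL L (P i))%MS) :
  let ki i := \rank (C :&: toL L (P i))%MS in
  let Lam := [set i : 'I_t | ki i != 0%N] in
  (* (1) *)
  [/\ ((forall c : forall i : 'I_t, 'rV[L]_(d i),
          (forall i, (c i <= Ci i)%MS) ->
          ((\sum_i c i *m toL L (P i))%R <= C)%MS)
       /\ (forall c c' : forall i : 'I_t, 'rV[L]_(d i),
          (forall i, (c i <= Ci i)%MS) -> (forall i, (c' i <= Ci i)%MS) ->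
          \sum_i c i *m toL L (P i) = \sum_i c' i *m toL L (P i) ->
          forall i, c i = c' i)
       /\ (forall y : 'rV[L]_n, (y <= C)%MS ->
          exists c : forall i : 'I_t, 'rV[L]_(d i),
            (forall i, (c i <= Ci i)%MS) /\ \sum_i c i *m toL L (P i) = y)
       /\ (forall r, (1 <= r <= k)%N ->
          GRW B (\mxdiag_(i < t) Ci i) r = GRW B C r)),
   (* (2) *)
   (forall r, (1 <= r <= k)%N ->
      GRW B C r = natmin (fun w => exists rho : 'I_t -> nat,
          [/\ forall i, i \in Lam -> (rho i <= ki i)%N,
              (\sum_(i in Lam) rho i)%N = r
            & (\sum_(i in Lam) GRW B (Ci i) (rho i))%N = w])
      /\
      GRW B C r = natmin (fun w => exists rho : 'I_t -> nat,
          [/\ forall i, i \in Lam -> (rho i <= ki i)%N,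
              (\sum_(i in Lam) rho i)%N = r
            & (\sum_(i in Lam) GRW B (C :&: toL L (P i))%MS (rho i))%N = w])),
   (* (3) *)
   (forall i, i \in Lam -> forall ri, (1 <= ri <= ki i)%N ->
      (GRW B (Ci i) ri <= d i - ki i + ri)%N)
 & (* (4) *)
   (forall r, (1 <= r <= k)%N ->
      (GRW B C r <= natmin (fun w => exists rho : 'I_t -> nat,
          [/\ forall i, i \in Lam -> (rho i <= ki i)%N,
              (\sum_(i in Lam) rho i)%N = r
            & (\sum_(i in Lam | rho i != 0%N) (d i - ki i))%N = w]) + r)%N)].
Proof.
move=> ki Lam.
pose Cp i := (C :&: toL L (P i))%MS.
have fPL : forall i, row_free (toL L (P i)) by move=> i; rewrite /toL row_free_map.
have F1 : forall i, (Ci i *m toL L (P i) :=: Cp i)%MS.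
  move=> i; apply/eqmxP/andP; split.
    by apply/row_subP => j; rewrite row_mul -HCi row_sub.
  apply/row_subP => j.
  have /submxP [c ec] : (row j (Cp i) <= toL L (P i))%MS.
    exact: submx_trans (row_sub _ _) (capmxSr _ _).
  have cC : (c <= Ci i)%MS by rewrite HCi -ec row_sub.
  by rewrite ec submxMr.
have F3 : forall i, \rank (Ci i) = ki i.
  by move=> i; rewrite -(mxrankMfree _ (fPL i)) (F1 i).
have F4 : forall i r, GRW B (Ci i) r = GRW B (Cp i) r.
  by move=> i r; rewrite -(GRW_free HB _ r (HPfree i)); exact: (GRW_eq HB _ (F1 i)).
have HCLam : (C <= \sum_(i in Lam) Cp i)%MS.
  rewrite HCsum; apply/sumsmx_subP => i _.
  case: (boolP (i \in Lam)) => iL; first by rewrite (sumsmx_sup i).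
  have : ki i = 0%N by move: iL; rewrite inE negbK => /eqP.
  by move/eqP; rewrite mxrank_eq0 => /eqP ->; rewrite sub0mx.
have HAX : forall i, (Cp i <= toL L <<P i>>)%MS.
  by move=> i; apply: submx_trans (capmxSr _ _) _; rewrite toL_sub genmxE.
have CpC : forall i, (Cp i <= C)%MS by move=> i; apply: capmxSl.
have hk : \rank C = k by [].
have LOW : forall r, (r <= k)%N -> exists rho : 'I_t -> nat,
    [/\ forall i, i \in Lam -> (rho i <= ki i)%N,
        (\sum_(i in Lam) rho i)%N = r &
        (\sum_(i in Lam) GRW B (Cp i) (rho i) <= GRW B C r)%N].
  move=> r hr; have [D [hD1 hD2 hD3]] := GRW_spec HB (leq_trans hr (eq_leq (esym HCdim))).
  have [rho [b s g]] := lower HB HVdirect HAX (submx_trans hD1 HCLam).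
  by exists rho; split=> [i _||]; [apply: b | rewrite s hD2 | rewrite -hD3].
have UP : forall rho : 'I_t -> nat, (forall i, i \in Lam -> (rho i <= ki i)%N) ->
    (GRW B C (\sum_(i in Lam) rho i) <= \sum_(i in Lam) GRW B (Cp i) (rho i))%N.
  move=> rho hb.
  have hD : forall i, exists Di : 'M[L]_n, i \in Lam -> [/\ (Di <= Cp i)%MS,
      \rank Di = rho i & W Di = GRW B (Cp i) (rho i)].
    move=> i; case: (boolP (i \in Lam)) => iL; last by exists 0.
    have [D [h1 h2 h3]] := GRW_spec HB (hb i iL).
    exists <<D>>%MS => _; split; rewrite ?genmxE //.
    by rewrite -h3; apply: W_eq; apply: genmxE.
  have [Dv hDv] := fin_all_exists hD.
  have hV : forall i, exists V : 'M[K]_n, \rank V = W (Dv i) /\ (Dv i <= toL L V)%MS.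
    move=> i; have [[q [V [h1 h2]]] _] := W_spec (Dv i).
    exists <<V>>%MS; rewrite genmxE; split=> //; apply: submx_trans h2 _.
    by rewrite toL_sub genmxE.
  have [Vv hVv] := fin_all_exists hV.
  set Ds := (\sum_(i in Lam) Dv i)%MS.
  have hdir : mxdirect Ds.
    apply/mxdirect_sumsP => i iL.
    move/mxdirect_sumsP: HCdirect => /(_ i isT) h0.
    apply/eqP; rewrite -submx0 -[X in (_ <= X)%MS]h0; apply: capmxS.
      by case: (hDv i iL).
    apply/sumsmx_subP => j /andP [jL ji]; rewrite (sumsmx_sup j) //.
    by case: (hDv j jL).
  have rDs : \rank Ds = (\sum_(i in Lam) rho i)%N.
    rewrite (mxdirectP hdir) /=; apply: eq_bigr => i iL; by case: (hDv i iL).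
  have DsC : (Ds <= C)%MS.
    rewrite /Ds; apply/sumsmx_subP => i iL; case: (hDv i iL) => h1 _ _.
    exact: submx_trans h1 (CpC i).
  apply: leq_trans (_ : W Ds <= _)%N.
    rewrite -{1}rDs; exact: GRW_le.
  apply: leq_trans (_ : \rank (\sum_(i in Lam) Vv i)%MS <= _)%N.
    apply: W_le; apply/sumsmx_subP => i iL; case: (hVv i) => _ h.
    by apply: submx_trans h _; rewrite toL_sub (sumsmx_sup i).
  apply: leq_trans (mxrank_sum_leqif _).1 _ => /=.
  apply: leq_sum => i iL; case: (hVv i) => -> _.
  by case: (hDv i iL) => _ _ ->.
have MAIN : forall r, (1 <= r <= k)%N ->
    GRW B C r = natmin (fun w => exists rho : 'I_t -> nat,
          [/\ forall i, i \in Lam -> (rho i <= ki i)%N,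
              (\sum_(i in Lam) rho i)%N = r
            & (\sum_(i in Lam) GRW B (C :&: toL L (P i))%MS (rho i))%N = w]).
  move=> r /andP [_ hr]; have [rho0 [b0 s0 g0]] := LOW r hr.
  have e0 : (\sum_(i in Lam) GRW B (Cp i) (rho0 i))%N = GRW B C r.
    by apply/eqP; rewrite eqn_leq g0 -{1}s0 UP.
  have ne : exists w, exists rho : 'I_t -> nat,
          [/\ forall i, i \in Lam -> (rho i <= ki i)%N,
              (\sum_(i in Lam) rho i)%N = r
            & (\sum_(i in Lam) GRW B (C :&: toL L (P i))%MS (rho i))%N = w].
    by exists (GRW B C r), rho0.
  have [[rho [b s e]] hmin] := natminP ne.
  apply/eqP; rewrite eqn_leq; apply/andP; split.
    by rewrite -e -{1}s; apply: UP.
  by apply: hmin; exists rho0.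
have P3 : forall i, i \in Lam -> forall ri, (1 <= ri <= ki i)%N ->
    (GRW B (Ci i) ri <= d i - ki i + ri)%N.
  move=> i _ ri /andP [_ h]; rewrite -F3; apply: (singleton HB); by rewrite F3.
split.
- split; [|split; [|split]].
  + move=> c hc; apply: summx_sub => i _.
    by have := hc i; rewrite HCi => h; apply: submx_trans h (capmxSl _ _).
  + move=> c c' hc hc' e.
    have hu : forall i, ((c i - c' i) *m toL L (P i) <= Cp i)%MS.
      by move=> i; rewrite -HCi addmx_sub ?eqmx_opp.
    have hs : \sum_i (c i - c' i) *m toL L (P i) = 0.
      under eq_bigr do rewrite mulmxBl.
      by rewrite sumrB e subrr.
    move=> i; have := direct_sum0 HCdirect hu hs i.
    move/eqP; rewrite mulmx_free_eq0 // subr_eq0 => /eqP //.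
  + move=> y hy; rewrite HCsum in hy; have [u_ ey] := sub_sumsmxP hy.
    have hc : forall i, exists c : 'rV_(d i), u_ i *m Cp i = c *m toL L (P i).
      move=> i; apply/submxP; apply: submx_trans (submxMl _ _) (capmxSr _ _).
    have [cv hcv] := fin_all_exists hc.
    exists cv; split.
      by move=> i; rewrite HCi -hcv submxMl.
    by rewrite ey; apply: eq_bigr => i _; rewrite hcv.
  + set Q := \mxcol_i P i.
    have fQ : row_free Q.
      rewrite /row_free /Q eqmx_col (mxdirectP HVdirect) /=; apply/eqP.
      by apply: eq_bigr => i _; rewrite genmxE; apply/eqP; apply: HPfree.
    move=> r _; rewrite -(GRW_free HB _ r fQ); apply: (GRW_eq HB).
    have eQ : toL L Q = \mxcol_i toL L (P i) by apply/matrixP => a b; rewrite !mxE.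
    rewrite eQ mul_mxdiag_mxcol; apply: eqmx_trans (eqmx_col _) _.
    apply: eqmx_trans _ (eqmx_sym HCsum).
    apply/eqmxP/andP; split; apply/sumsmx_subP => i _.
      by apply: (sumsmx_sup i) => //; rewrite genmxE (F1 i).
    by apply: (sumsmx_sup i) => //; rewrite genmxE (F1 i).
- move=> r hr; split; last exact: MAIN.
  rewrite (MAIN r hr); apply: natmin_ext => w.
  by split; case=> rho [h1 h2 h3]; exists rho; split=> //; rewrite -h3;
    apply: eq_bigr => i _; rewrite F4.
- exact: P3.
- move=> r hr; have [rho0 [b0 s0 _]] := LOW r (proj2 (andP hr)).
  have ne4 : exists w, exists rho : 'I_t -> nat,
          [/\ forall i, i \in Lam -> (rho i <= ki i)%N,
              (\sum_(i in Lam) rho i)%N = r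
            & (\sum_(i in Lam | rho i != 0%N) (d i - ki i))%N = w].
    by exists (\sum_(i in Lam | rho0 i != 0%N) (d i - ki i))%N, rho0.
  have [[rho [b s <-]] _] := natminP ne4.
  apply: leq_trans (_ : GRW B C r <= \sum_(i in Lam) GRW B (Ci i) (rho i))%N _.
    by rewrite -s (eq_bigr _ (fun i _ => F4 i (rho i))); apply: UP.
  rewrite -s big_mkcondr -big_split /=; apply: leq_sum => i iL.
  have [->|nz] := eqVneq (rho i) 0%N; first by rewrite (GRW0 HB).
  by rewrite /=; apply: P3 => //; rewrite lt0n nz b.
Qed.
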